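(* Let $\Phi=\{\varphi_i\}_{i=1}^K$ be a homogeneous IFS on $\mathbb R^d$ with common contraction ratio $r\in(0,1)$ satisfying the strong separation condition, with self-similar set $X$, coding map $\pi:\Sigma\to X$ and induced map $T:X\to X$. Let $\psi:\mathbb N\to[0,\infty)$. Then there exists $N\in\mathbb N$ depending only on $\Phi$ such that $$\pi\big(R_{\lfloor\psi\rfloor+N}\big)\subseteq\tilde R_\psi\subseteq\pi\big(R_{\lfloor\psi\rfloor-N}\big).$$
   Context: A contracting similarity is a map $\varphi:\mathbb R^d\to\mathbb R^d$ with $\|\varphi(x)-\varphi(y)\|=r\|x-y\|$ for some $r\in(0,1)$; an IFS is a finite set $\Phi=\{\varphi_i\}_{i=1}^K$ of contracting similarities, homogeneous if all have the same ratio $r$. Its self-similar set is the unique nonempty compact $X$ with $X=\bigcup_i\varphi_i(X)$. With $\Sigma=\{1,\dots,K\}^{\mathbb N}$, $\pi(\mathbf i)=\lim_{n\to\infty}\varphi_{i_1}\circ\cdots\circ\varphi_{i_n}(0)$. $\Phi$ satisfies the strong separation condition if $\varphi_i(X)\cap\varphi_j(X)=\emptyset$ for $i\ne j$; then $T(x)=\varphi_i^{-1}(x)$ for $x\in\varphi_i(X)$. $\tilde R_\psi=\{x\in X:\|T^n(x)-x\|\le r^{\psi(n)}\text{ for infinitely many }n\in\mathbb N\}$ (Euclidean norm). On $\Sigma$, $|\mathbf i\wedge\mathbf j|=\inf\{n\ge0:i_{n+1}\ne j_{n+1}\}$, $d(\mathbf i,\mathbf j)=K^{-|\mathbf i\wedge\mathbf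 j|}$, $\sigma$ is the left shift, and for an integer-valued function $\phi$ on $\mathbb N$, $R_\phi=\{\mathbf i\in\Sigma:d(\sigma^n\mathbf i,\mathbf i)\le K^{-\phi(n)}\text{ for infinitely many }n\}$; here $\lfloor\psi\rfloor\pm N$ denotes $n\mapsto\lfloor\psi(n)\rfloor\pm N$. *)

(* Defs.v *)
From HB Require Import structures.
From mathcomp Require Import all_boot all_order all_algebra.
From mathcomp Require Import all_classical all_reals all_analysis.
Set Implicit Arguments. Unset Strict Implicit. Unset Printing Implicit Defensive.
Import Order.TTheory GRing.Theory Num.Theory.
Import numFieldNormedType.Exports.
Local Open Scope classical_set_scope.
Local Open Scope ring_scope.

Section Defs.
Variable R : realType.

Definition enorm (d : nat) (v : 'rV[R]_d) : R :=
  Num.sqrt (\sum_(i < d) v ord0 i ^+ 2).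

Definition contracting_similarity (d : nat) (r : R) (phi : 'rV[R]_d -> 'rV[R]_d) :=
  0 < r < 1 /\ forall x y, enorm (phi x - phi y) = r * enorm (x - y).

(* X is the self-similar set of the IFS {phi_i}_{i < K}: nonempty compact with
   X = \bigcup_i phi_i(X) (such a set is unique). *)
Definition is_attractor (d K : nat) (phi : 'I_K -> 'rV[R]_d -> 'rV[R]_d)
  (X : set 'rV[R]_d) :=
  X !=set0 /\ compact X /\ X = \bigcup_(i in [set: 'I_K]) (phi i @` X).

Definition SSC (d K : nat) (phi : 'I_K -> 'rV[R]_d -> 'rV[R]_d) (X : set 'rV[R]_d) :=
  forall i j : 'I_K, i != j -> phi i @` X `&` phi j @` X = set0.

(* phi_{w_1} o ... o phi_{w_n} (0) ; sequences are indexed from 0, so w 0 = i_1. *)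
Definition comp_prefix (d K : nat) (phi : 'I_K -> 'rV[R]_d -> 'rV[R]_d)
  (w : nat -> 'I_K) (n : nat) : 'rV[R]_d :=
  foldr (fun k acc => phi (w k) acc) 0 (iota 0 n).

Definition coding (d K : nat) (phi : 'I_K -> 'rV[R]_d -> 'rV[R]_d)
  (w : nat -> 'I_K) : 'rV[R]_d :=
  limn (comp_prefix phi w).

(* induced map T : T x = phi_i^{-1} x for x in phi_i(X) (arbitrary outside X). *)
Definition induced_map (d K : nat) (phi : 'I_K -> 'rV[R]_d -> 'rV[R]_d)
  (X : set 'rV[R]_d) (x : 'rV[R]_d) : 'rV[R]_d :=
  xget x [set y | X y /\ exists i, phi i y = x].

Definition shiftn (K : nat) (n : nat) (w : nat -> 'I_K) : nat -> 'I_K :=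
  fun k => w (k + n)%N.

(* d(i, j) = K^{-|i /\ j|}, |i /\ j| = first index at which i and j differ
   (infinite, hence distance 0, if i = j). *)
Definition seq_dist (K : nat) (i j : nat -> 'I_K) : R :=
  match pselect (exists n, i n != j n) with
  | left H => (K%:R : R) ^- (@ex_minn (fun n => i n != j n) H)
  | right _ => 0
  end.

Definition Rset (K : nat) (f : nat -> int) : set (nat -> 'I_K) :=
  [set w | forall m : nat, exists n : nat, (m <= n)%N /\
     seq_dist (shiftn n w) w <= (K%:R : R) ^ (- f n)].

Definition Rtilde (d K : nat) (phi : 'I_K -> 'rV[R]_d -> 'rV[R]_d)
  (X : set 'rV[R]_d) (r : R) (psi : nat -> R) : set 'rV[R]_d :=
  [set x | X x /\ forall m : nat, exists n : nat, (m <= n)%N /\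
     enorm (iter n (induced_map phi X) x - x) <= r `^ (psi n)].

End Defs.

(* Main.v *)
Require Import Defs.
From HB Require Import structures.
From mathcomp Require Import all_boot all_order all_algebra.
From mathcomp Require Import all_classical all_reals all_analysis.
From mathcomp Require Import ring lra zify.
Import Order.TTheory GRing.Theory Num.Theory.
Import numFieldNormedType.Exports.
Local Open Scope classical_set_scope.
Local Open Scope ring_scope.

Section Basic.
Context {R : realType} {d : nat}.

Lemma enorm_ge0 (v : 'rV[R]_d) : 0 <= enorm v.
Proof. exact: sqrtr_ge0. Qed.

Lemma coord_le_enorm (v : 'rV[R]_d) j : `|v ord0 j| <= enorm v.
Proof.
rewrite /enorm -(sqrtr_sqr (v ord0 j)) ler_sqrt; last first.
  by apply: sumr_ge0 => i _; rewrite sqr_ge0.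
by rewrite (bigD1 j) //= lerDl; apply: sumr_ge0 => i _; rewrite sqr_ge0.
Qed.

Lemma norm_le_enorm (v : 'rV[R]_d) : `|v| <= enorm v.
Proof.
rewrite [leLHS]/Num.Def.normr /= mx_normrE; apply: bigmax_le; first exact: enorm_ge0.
by move=> [i j] _ /=; rewrite (ord1 i); apply: coord_le_enorm.
Qed.

Lemma enorm_le_norm (v : 'rV[R]_d) : enorm v <= d%:R * `|v|.
Proof.
have n0 : 0 <= `|v| by [].
have cj : forall j, `|v ord0 j| <= `|v|.
  move=> j; rewrite [leRHS]/Num.Def.normr /= mx_normrE.
  apply/bigmax_geP; right; exists (ord0, j) => //.
rewrite /enorm -(ger0_norm (mulr_ge0 (ler0n _ d) n0)) -(sqrtr_sqr (_ * _)).
rewrite ler_sqrt; last by rewrite sqr_ge0.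
apply: (@le_trans _ _ (\sum_(i < d) `|v|^+2)).
  apply: ler_sum => i _; rewrite -real_normK ?num_real //.
  by rewrite lerXn2r ?nnegrE //.
rewrite sumr_const card_ord -mulr_natl mulr1 exprMn.
rewrite -[leLHS]mulr_natl; apply: (ler_wpM2r (sqr_ge0 _)).
by rewrite -natrX ler_nat; case: d => // n; rewrite expnS leq_pmulr.
Qed.

Lemma enorm_eq0 (v : 'rV[R]_d) : enorm v = 0 -> v = 0.
Proof.
move=> h; apply/normr0_eq0/eqP; rewrite eq_le normr_ge0 andbT -h.
exact: norm_le_enorm.
Qed.

Lemma enorm0 : enorm (0 : 'rV[R]_d) = 0.
Proof.
rewrite /enorm (eq_bigr (fun=> 0)) ?big1 ?sqrtr0 // => i _; by rewrite mxE expr0n.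
Qed.

End Basic.

Lemma ord_ne_gt1 (K : nat) (a b : 'I_K) : a != b -> (1 < K)%N.
Proof.
move: a b; case: K => [|[|K']] a b //; first by case: a.
by rewrite (ord1 a) (ord1 b) eqxx.
Qed.

Lemma seq_distP (R : realType) (K : nat) (u v : nat -> 'I_K) :
  (seq_dist R u v = 0 /\ forall n, u n = v n) \/
  exists k, [/\ u k != v k, forall j, (j < k)%N -> u j = v j &
     seq_dist R u v = (K%:R : R) ^- k].
Proof.
rewrite /seq_dist; case: pselect => [H | H].
  right; case: (ex_minnP H) => k hk hmin; exists k; split => //.
  move=> j hj; apply/eqP; apply: contraTT hj => hne; rewrite -leqNgt; exact: hmin.
left; split => // n; apply/eqP; apply: contraT => hn; apply: False_ind; apply: H.
by exists n.
Qed.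

Lemma powR_anti (R : realType) (r a b : R) : 0 < r -> r < 1 -> a <= b ->
  r `^ b <= r `^ a.
Proof.
move=> r0 r1 ab; rewrite /powR gt_eqF // ler_expR ler_wnM2r //.
by rewrite ln_le0 // ltW.
Qed.

Section IFS.
Variables (R : realType) (d K : nat) (r : R).
Variable phi : 'I_K -> 'rV[R]_d -> 'rV[R]_d.
Variable X : set 'rV[R]_d.
Hypothesis hsim : forall i, contracting_similarity r (phi i).
Hypothesis hatt : is_attractor phi X.
Hypothesis hssc : SSC phi X.

Lemma ex_index : exists i : 'I_K, True.
Proof.
case: hatt => [[x Xx] [_ XE]]; move: Xx; rewrite XE => -[i _ _]; by exists i.
Qed.

Lemma r_gt0 : 0 < r.
Proof. by case: ex_index => i _; case: (hsim i) => /andP[]. Qed.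
Lemma r_lt1 : r < 1.
Proof. by case: ex_index => i _; case: (hsim i) => /andP[]. Qed.

Lemma phi_dist i x y : enorm (phi i x - phi i y) = r * enorm (x - y).
Proof. by case: (hsim i). Qed.

Definition G (w : nat -> 'I_K) n x := foldr (fun k acc => phi (w k) acc) x (iota 0 n).

Lemma GS w n x : G w n.+1 x = G w n (phi (w n) x).
Proof. by rewrite /G -[n.+1]addn1 iotaD foldr_cat /= add0n. Qed.

Lemma G0 w x : G w 0 x = x.
Proof. by []. Qed.

Lemma G_dist w n x y : enorm (G w n x - G w n y) = r ^+ n * enorm (x - y).
Proof.
elim: n x y => [|n IH] x y; first by rewrite expr0 mul1r.
by rewrite !GS IH phi_dist exprSr mulrA.
Qed.

Lemma shift_shift n (w : nat -> 'I_K) : shiftn 1 (shiftn n w) = shiftn n.+1 w.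
Proof. by apply: funext => j; rewrite /shiftn addn1 addSn addnS. Qed.

Lemma shift0 n (w : nat -> 'I_K) : shiftn n w 0%N = w n.
Proof. by rewrite /shiftn add0n. Qed.

Lemma G_shift w n x : G w n.+1 x = phi (w 0%N) (G (shiftn 1 w) n x).
Proof.
elim: n x => [|n IH] x; first by [].
by rewrite GS IH [in RHS]GS /shiftn addn1.
Qed.

Lemma G_agree u v n x : (forall j, (j < n)%N -> u j = v j) -> G u n x = G v n x.
Proof.
elim: n x => [|n IH] x h; first by [].
by rewrite !GS h // IH // => j hj; apply: h; apply: ltnW.
Qed.

Lemma phi_in i x : X x -> X (phi i x).
Proof.
case: hatt => [_ [_ XE]] Xx; rewrite XE; exists i => //; by exists x.
Qed.

Lemma G_in w n x : X x -> X (G w n x).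
Proof.
elim: n x => [|n IH] x Xx; first by [].
by rewrite GS; apply: IH; apply: phi_in.
Qed.

Lemma cp_G w n : comp_prefix phi w n = G w n 0.
Proof. by []. Qed.

Definition M := \sum_(i < K) enorm (phi i 0).

Lemma M_ge i : enorm (phi i 0) <= M.
Proof.
rewrite /M (bigD1 i) //= lerDl; apply: sumr_ge0 => j _; exact: enorm_ge0.
Qed.

Lemma M_ge0 : 0 <= M.
Proof. apply: sumr_ge0 => j _; exact: enorm_ge0. Qed.

Definition C0 := M / (1 - r).

Lemma C0_ge0 : 0 <= C0.
Proof.
by rewrite /C0 divr_ge0 ?M_ge0 // subr_ge0 ltW // r_lt1.
Qed.

Lemma MC0 : M = C0 * (1 - r).
Proof.
rewrite /C0 -mulrA mulVf ?mulr1 //.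
by rewrite subr_eq0 eq_sym lt_eqF // r_lt1.
Qed.

Lemma cp_step w n :
  `|comp_prefix phi w n.+1 - comp_prefix phi w n| <= M * r ^+ n.
Proof.
rewrite !cp_G GS; apply: le_trans (norm_le_enorm _) _.
rewrite G_dist subr0 mulrC; apply: ler_wpM2r; last exact: M_ge.
exact/exprn_ge0/ltW/r_gt0.
Qed.

Lemma cp_cauchy w n k :
  `|comp_prefix phi w (n + k) - comp_prefix phi w n| <= C0 * (r ^+ n - r ^+ (n + k)).
Proof.
elim: k => [|k IH]; first by rewrite addn0 !subrr normr0 mulr0.
have := cp_step w (n + k); rewrite addnS.
set a := comp_prefix phi w (n + k).+1; set b := comp_prefix phi w (n + k).
set c := comp_prefix phi w n => h1.
have -> : a - c = (a - b) + (b - c) by rewrite addrA subrK.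
apply: le_trans (ler_normD _ _) _; apply: le_trans (lerD h1 IH) _.
rewrite MC0 exprSr le_eqVlt; apply/orP; left; apply/eqP; ring.
Qed.



Lemma r_ge0 : 0 <= r. Proof. exact/ltW/r_gt0. Qed.
Lemma rn_ge0 n : 0 <= r ^+ n. Proof. exact/exprn_ge0/r_ge0. Qed.

Lemma geo_ev (A eps : R) : 0 <= A -> 0 < eps ->
  exists N, forall n, (N <= n)%N -> A * r ^+ n < eps.
Proof.
move=> A0 e0.
have hr : `|r| < 1 by rewrite ger0_norm ?r_ge0 // r_lt1.
have e1 : 0 < eps / (A + 1) by rewrite divr_gt0 // ltr_wpDl.
have := (cvgrPdist_lt _ _).1 (cvg_expr hr) _ e1.
case=> N _ HN; exists N => n /HN /=; rewrite sub0r normrN ger0_norm ?rn_ge0 // => h.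
apply: le_lt_trans (_ : A * (eps / (A + 1)) < eps).
  by apply: ler_wpM2l => //; apply: ltW.
rewrite mulrCA gtr_pMr // ltr_pdivrMr ?ltr_wpDl // mul1r ltrDl // ltr01.
Qed.

Lemma le0_of_geo (x A : R) : 0 <= A -> (forall n, x <= A * r ^+ n) -> x <= 0.
Proof.
move=> A0 h; apply/ler_addgt0Pr => e e0; rewrite add0r.
have [N HN] := geo_ev _ _ A0 e0.
by apply: le_trans (h N) _; apply/ltW/HN.
Qed.

Lemma cp_cvg w : cvg (comp_prefix phi w @ \oo).
Proof.
apply: cauchy_cvg; apply: cauchy_exP => e e0.
have [N HN] := geo_ev _ _ C0_ge0 e0.
exists (comp_prefix phi w N); exists N => // n /= hn.
rewrite -ball_normE /ball_ /=.
rewrite -(subnKC hn) distrC; apply: le_lt_trans (cp_cauchy _ _ _) _.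
apply: le_lt_trans (HN N (leqnn N)).
by apply: ler_wpM2l; [exact: C0_ge0 | rewrite gerBl rn_ge0].
Qed.

Lemma coding_tail w n :
  `|coding phi w - comp_prefix phi w n| <= C0 * r ^+ n.
Proof.
apply/ler_addgt0Pr => e e0.
have := (cvgrPdist_le _ _).1 (cp_cvg w) _ e0.
case=> N _ HN.
have hm := HN (maxn N n) (leq_maxl _ _); rewrite /= in hm.
rewrite /coding.
set l := limn _ in hm *.
have -> : l - comp_prefix phi w n = (l - comp_prefix phi w (maxn N n)) +
   (comp_prefix phi w (maxn N n) - comp_prefix phi w n) by rewrite addrA subrK.
apply: le_trans (ler_normD _ _) _; rewrite addrC; apply: lerD => //.
rewrite -(subnKC (leq_maxr N n)); apply: le_trans (cp_cauchy _ _ _) _.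
by apply: ler_wpM2l; [exact: C0_ge0 | rewrite gerBl rn_ge0].
Qed.

Lemma coding_norm w : `|coding phi w| <= C0.
Proof. by have := coding_tail w 0; rewrite subr0 expr0 mulr1. Qed.



Let cc : R := d%:R.
Lemma cc_ge0 : 0 <= cc. Proof. exact: ler0n. Qed.

Lemma phi_lip i x y : `|phi i x - phi i y| <= r * cc * `|x - y|.
Proof.
apply: le_trans (norm_le_enorm _) _; rewrite phi_dist -mulrA.
by apply: ler_wpM2l; [exact: r_ge0 | exact: enorm_le_norm].
Qed.

Lemma coding_cons w : coding phi w = phi (w 0%N) (coding phi (shiftn 1 w)).
Proof.
apply/eqP; rewrite -subr_eq0 -normr_le0.
have A0 : 0 <= C0 * r + r * cc * C0.
  have := C0_ge0; have := r_ge0; have := cc_ge0; move=> h1 h2 h3.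
  by rewrite addr_ge0 // mulr_ge0 // mulr_ge0.
apply: (le0_of_geo _ _ A0) => n.
set cw := coding phi w; set cs := coding phi (shiftn 1 w).
have e : cw - phi (w 0%N) cs = (cw - comp_prefix phi w n.+1) +
   (comp_prefix phi w n.+1 - phi (w 0%N) cs) by rewrite addrA subrK.
rewrite e; apply: le_trans (ler_normD _ _) _.
rewrite mulrDl; apply: lerD.
  by apply: le_trans (coding_tail _ _) _; rewrite exprS mulrA.
have -> : comp_prefix phi w n.+1 = phi (w 0%N) (comp_prefix phi (shiftn 1 w) n).
  exact: G_shift.
apply: le_trans (phi_lip _ _ _) _.
have := coding_tail (shiftn 1 w) n; rewrite distrC => h.
apply: le_trans (ler_wpM2l (mulr_ge0 r_ge0 cc_ge0) h) _.
by rewrite /C0 !mulrA.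
Qed.

Lemma coding_G w k : coding phi w = G w k (coding phi (shiftn k w)).
Proof.
elim: k => [|k IH].
  by rewrite G0; congr coding; apply: funext => j; rewrite /shiftn addn0.
by rewrite IH GS coding_cons shift_shift shift0.
Qed.


Lemma X_ne : exists x, X x.
Proof. by case: hatt => [[x Xx] _]; exists x. Qed.

Lemma X_closed : closed X.
Proof. by case: hatt => [_ [cX _]]; apply: compact_closed => //; apply: norm_hausdorff. Qed.

Lemma coding_in w : X (coding phi w).
Proof.
have [x0 Xx0] := X_ne.
apply: (@closed_cvg _ _ \oo _ (fun n => G w n x0) X X_closed).
  by apply: nearW => n; apply: G_in.
apply/cvgrPdist_le => e e0.
have A0 : 0 <= cc * (C0 + `|x0|) by rewrite mulr_ge0 ?cc_ge0 // addr_ge0 ?C0_ge0.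
have [N HN] := geo_ev _ _ A0 e0.
exists N => // n /= hn.
rewrite (coding_G w n); apply: le_trans (norm_le_enorm _) _.
rewrite G_dist; apply: le_trans (ltW (HN n hn)); rewrite mulrC.
apply: ler_wpM2r; first exact: rn_ge0.
apply: le_trans (enorm_le_norm _) _; apply: ler_wpM2l; first exact: cc_ge0.
apply: le_trans (ler_normB _ _) _; apply: lerD => //; exact: coding_norm.
Qed.

Lemma phi_inj i x y : phi i x = phi i y -> x = y.
Proof.
move=> h; have := phi_dist i x y; rewrite h subrr enorm0 => /esym /eqP.
rewrite mulf_eq0 gt_eqF ?r_gt0 //= => /eqP /enorm_eq0 /eqP.
by rewrite subr_eq0 => /eqP.
Qed.

Lemma T_coding w : induced_map phi X (coding phi w) = coding phi (shiftn 1 w).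
Proof.
rewrite /induced_map.
set P := [set y | X y /\ exists i, phi i y = coding phi w].
have ex : exists y, P y.
  by exists (coding phi (shiftn 1 w)); split; [exact: coding_in | exists (w 0%N); rewrite -coding_cons].
have [Xy [i hi]] := xgetPex (coding phi w) ex.
set y := xget _ P in Xy hi *.
have ei : i = w 0%N.
  apply/eqP; apply: contraT => hne.
  have := hssc _ _ hne.
  have : (phi i @` X `&` phi (w 0%N) @` X) (coding phi w).
    split; first by exists y.
    by exists (coding phi (shiftn 1 w)); [exact: coding_in | rewrite -coding_cons].
  by move=> + E; rewrite E.
by apply: (@phi_inj i); rewrite hi ei -coding_cons.
Qed.

Lemma iter_T w n :
  iter n (induced_map phi X) (coding phi w) = coding phi (shiftn n w).
Proof.
elim: n => [|n IH] /=.
  by congr coding; apply: funext => j; rewrite /shiftn addn0.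
by rewrite IH T_coding shift_shift.
Qed.


Lemma X_bounded : exists B, 0 <= B /\ forall x, X x -> `|x| <= B.
Proof.
case: hatt => [_ [cX _]]; have [B [_ HB]] := compact_bounded cX.
exists (`|B| + 1); split; first by rewrite addr_ge0.
apply: HB; apply: le_lt_trans (ler_norm B) _; by rewrite ltrDl.
Qed.

Lemma coding_surj x : X x -> exists w, coding phi w = x.
Proof.
move=> Xx.
have [i0 _] := ex_index.
have : forall y, exists p : 'I_K * 'rV[R]_d, X y -> X p.2 /\ phi p.1 p.2 = y.
  move=> y; case: (pselect (X y)) => [Xy | nXy]; last by exists (i0, y).
  case: hatt => [_ [_ XE]]; move: Xy; rewrite {1}XE => -[i _ [z Xz e]].
  by exists (i, z).
case/choice => f hf.
pose xs n := iter n (fun y => (f y).2) x.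
pose w n := (f (xs n)).1.
have Xxs : forall n, X (xs n).
  by elim=> [|n IH] //=; case: (hf _ IH).
have exs : forall n, xs n = phi (w n) (xs n.+1).
  by move=> n; case: (hf _ (Xxs n)) => _ ->.
have xG : forall n, x = G w n (xs n).
  by elim=> [|n IH] //; rewrite GS -exs.
exists w; apply/eqP; rewrite -subr_eq0 -normr_le0.
have [B [B0 HB]] := X_bounded.
have A0 : 0 <= cc * (C0 + B) by rewrite mulr_ge0 ?cc_ge0 // addr_ge0 ?C0_ge0.
apply: (le0_of_geo _ _ A0) => n.
rewrite (coding_G w n) (xG n); apply: le_trans (norm_le_enorm _) _.
rewrite G_dist mulrC; apply: ler_wpM2r; first exact: rn_ge0.
apply: le_trans (enorm_le_norm _) _; apply: ler_wpM2l; first exact: cc_ge0.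
apply: le_trans (ler_normB _ _) _; apply: lerD; [exact: coding_norm | exact: HB].
Qed.

Lemma dist_upper u v k : (forall j, (j < k)%N -> u j = v j) ->
  enorm (coding phi u - coding phi v) <= cc * (C0 + C0) * r ^+ k.
Proof.
move=> h.
rewrite (coding_G u k) (coding_G v k) (@G_agree v u) => [|j hj]; last by rewrite h.
rewrite G_dist mulrC; apply: ler_wpM2r; first exact: rn_ge0.
apply: le_trans (enorm_le_norm _) _; apply: ler_wpM2l; first exact: cc_ge0.
apply: le_trans (ler_normB _ _) _; apply: lerD; exact: coding_norm.
Qed.

Lemma phi_cont i : continuous (phi i).
Proof.
move=> x; apply/(@cvgrPdist_lt _ _ _ (nbhs x) (@nbhs_filter _ x)) => e e0.
have L0 : 0 < r * cc + 1 by rewrite ltr_wpDl // mulr_ge0 ?r_ge0 ?cc_ge0.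
have e1 : 0 < e / (r * cc + 1) by rewrite divr_gt0.
near=> y; have : ball x (e / (r * cc + 1)) y by near: y; exact: (@near_ball _ _ x _ e1).
rewrite -ball_normE /ball_ /= => hy.
apply: le_lt_trans (phi_lip _ _ _) _.
apply: le_lt_trans (_ : (r * cc) * (e / (r * cc + 1)) < e).
  by apply: ler_wpM2l; [rewrite mulr_ge0 ?r_ge0 ?cc_ge0 | exact: ltW].
rewrite mulrCA gtr_pMr // ltr_pdivrMr // mul1r ltrDl //.
Unshelve. all: by end_near.
Qed.


Lemma pair_gap i j : i != j -> exists2 del, 0 < del &
  forall x y, X x -> X y -> del <= `|phi i x - phi j y|.
Proof.
move=> hij; case: hatt => [[x0 Xx0] [cX XE]].
pose f := fun p : 'rV[R]_d * 'rV[R]_d => `|phi i p.1 - phi j p.2|.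
have fc : continuous f.
  move=> p; apply/(@cvgrPdist_lt _ _ _ (nbhs p) (@nbhs_filter _ p)) => e e0.
  have L0 : 0 < (r * cc) *+ 2 + 1 by rewrite ltr_wpDl // mulrn_wge0 // mulr_ge0 ?r_ge0 ?cc_ge0.
  have e1 : 0 < e / ((r * cc) *+ 2 + 1) by rewrite divr_gt0.
  near=> q; have : ball p (e / ((r * cc) *+ 2 + 1)) q.
    by near: q; exact: (@near_ball _ _ p _ e1).
  move=> [hb1 hb2]; move: hb1 hb2; rewrite -!ball_normE /ball_ /= => hb1 hb2.
  apply: le_lt_trans (ler_dist_dist _ _) _.
  have -> : phi i p.1 - phi j p.2 - (phi i q.1 - phi j q.2) =
    (phi i p.1 - phi i q.1) - (phi j p.2 - phi j q.2).
    by rewrite !opprD !opprK addrACA.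
  apply: le_lt_trans (ler_normB _ _) _.
  apply: le_lt_trans (lerD (phi_lip _ _ _) (phi_lip _ _ _)) _.
  rewrite -mulrDr.
  apply: le_lt_trans (_ : (r * cc) * ((e / ((r * cc) *+ 2 + 1)) *+ 2) < e).
    apply: ler_wpM2l; first by rewrite mulr_ge0 ?r_ge0 ?cc_ge0.
    by rewrite mulr2n; apply: lerD; apply: ltW.
  have ht : e / ((r * cc) *+ 2 + 1) * ((r * cc) *+ 2 + 1) = e by rewrite divfK // gt_eqF.
  have t0 := e1; have L0' : 0 <= r * cc by rewrite mulr_ge0 ?r_ge0 ?cc_ge0.
  rewrite -[X in _ < X]ht; nra.
have := @compact_EVT_min _ _ f (X `*` X).
case.
- by exists (x0, x0).
- exact: compact_setX.
- by apply: continuous_subspaceT => p; apply: fc.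
move=> c; rewrite inE => -[Xc1 Xc2] cmin.
exists (f c).
  rewrite /f normr_gt0 subr_eq0; apply/negP => /eqP E.
  have := hssc _ _ hij.
  have : (phi i @` X `&` phi j @` X) (phi i c.1).
    by split; [exists c.1 | exists c.2 => //; rewrite E].
  by move=> + F; rewrite F.
by move=> x y Xx Xy; apply: (cmin (x, y)); rewrite inE.
Unshelve. all: by end_near.
Qed.


Lemma delta_ex : exists2 del, 0 < del & forall i j, i != j ->
  forall x y, X x -> X y -> del <= `|phi i x - phi j y|.
Proof.
have : forall p : 'I_K * 'I_K, exists del, 0 < del /\ (p.1 != p.2 ->
    forall x y, X x -> X y -> del <= `|phi p.1 x - phi p.2 y|).
  move=> [i j] /=; case: (boolP (i != j)) => h.
    by have [del d0 hd] := pair_gap _ _ h; exists del.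
  by exists 1; split => //; rewrite h.
case/choice => D hD.
pose S := \sum_p (D p)^-1.
have Dp : forall p, 0 < D p by move=> p; case: (hD p).
have Sge : forall p, (D p)^-1 <= S.
  move=> p; rewrite /S (bigD1 p) //= lerDl; apply: sumr_ge0 => q _.
  by rewrite invr_ge0 ltW.
have [i0 _] := ex_index.
have S0 : 0 < S by apply: lt_le_trans (Sge (i0, i0)); rewrite invr_gt0.
exists S^-1; first by rewrite invr_gt0.
move=> i j hij x y Xx Xy; apply: le_trans ((hD (i, j)).2 hij x y Xx Xy).
by rewrite -(invrK (D (i, j))) lef_pV2 ?posrE ?invr_gt0 // Sge.
Qed.

Lemma dist_lower del u v k :
  (forall i j, i != j -> forall x y, X x -> X y -> del <= `|phi i x - phi j y|) ->
  (forall j, (j < k)%N -> u j = v j) -> u k != v k ->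
  del * r ^+ k <= enorm (coding phi u - coding phi v).
Proof.
move=> hdel h hk.
rewrite (coding_G u k) (coding_G v k) (@G_agree v u) => [|j hj]; last by rewrite h.
rewrite G_dist mulrC; apply: ler_wpM2l; first exact: rn_ge0.
apply: le_trans (norm_le_enorm _).
rewrite (coding_cons (shiftn k u)) (coding_cons (shiftn k v)) !shift0 !shift_shift.
by apply: hdel => //; apply: coding_in.
Qed.


Lemma main_sec : exists N : nat, forall psi : nat -> R, (forall n, 0 <= psi n) ->
    coding phi @` @Rset R K (fun n => Num.floor (psi n) + N%:Z)%R
      `<=` Rtilde phi X r psi /\
    Rtilde phi X r psi
      `<=` coding phi @` @Rset R K (fun n => Num.floor (psi n) - N%:Z)%R.
Proof.
have [del d0 hdel] := delta_ex.
have D0 : 0 <= cc * (C0 + C0) by rewrite mulr_ge0 ?cc_ge0 // addr_ge0 ?C0_ge0.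
have [N1 HN1] := geo_ev _ _ D0 ltr01.
have [N2 HN2] := geo_ev _ _ ler01 d0.
have [i0 _] := ex_index.
have K1 : (1 <= K%:R :> R) by rewrite ler1n; case: (K) i0 => [[]|].
exists (maxn N1 N2).+1 => psi psi0; split.
- move=> _ [w hw <-]; split; first exact: coding_in.
  move=> m; have [n [hmn hd]] := hw m; exists n; split => //.
  rewrite iter_T.
  have hf0 : (0 <= Num.floor (psi n))%R by rewrite floor_ge0.
  set fn := `|Num.floor (psi n)|%N.
  have hf : Num.floor (psi n) = fn%:Z by rewrite gez0_abs.
  rewrite hf in hd.
  case: (@seq_distP R K (shiftn n w) w) => [[_ heq] | [k [hk hag hsd]]].
    have -> : shiftn n w = w by apply: funext.
    by rewrite subrr enorm0 powR_ge0.
  have K2 := @ord_ne_gt1 K _ _ hk.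
  have hkk : (fn + (maxn N1 N2).+1 <= k)%N.
    rewrite leqNgt; apply/negP => hlt.
    have : (K%:R : R) ^ (- (fn%:Z + ((maxn N1 N2).+1)%:Z)) < K%:R ^ (- k%:Z).
      by rewrite ltr_eXz2l ?ltr1n //; lia.
    by rewrite -exprnN -hsd ltNge hd.
  apply: le_trans (dist_upper _ _ _ hag) _.
  have ek : k = (fn.+1 + (k - fn.+1))%N by rewrite subnKC //; lia.
  rewrite ek exprD mulrCA.
  apply: le_trans (_ : r ^+ fn.+1 * 1 <= _).
    apply: ler_wpM2l; first exact: rn_ge0.
    by apply/ltW/HN1; lia.
  rewrite mulr1 -powR_mulrn ?r_ge0 //; apply: powR_anti; [exact: r_gt0|exact: r_lt1|].
  apply/ltW; have := floorD1_gt (psi n); rewrite hf.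
  by rewrite intrD -!pmulrn natr1.
- move=> x [Xx hx]; have [w hw] := coding_surj _ Xx.
  exists w => //; rewrite -hw in hx.
  move=> m; have [n [hmn hd]] := hx m; exists n; split => //.
  rewrite iter_T in hd.
  have hf0 : (0 <= Num.floor (psi n))%R by rewrite floor_ge0.
  set fn := `|Num.floor (psi n)|%N.
  have hf : Num.floor (psi n) = fn%:Z by rewrite gez0_abs.
  rewrite hf.
  case: (@seq_distP R K (shiftn n w) w) => [[-> _] | [k [hk hag hsd]]].
    by apply: exprz_ge0; apply: le_trans K1.
  have hkk : (fn <= k + (maxn N1 N2).+1)%N.
    rewrite leqNgt; apply/negP => hlt.
    have hlow := dist_lower _ _ _ _ hdel hag hk.
    have : r `^ psi n <= r ^+ k * r ^+ (maxn N1 N2).+1.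
      rewrite -exprD -powR_mulrn ?r_ge0 //; apply: powR_anti; [exact: r_gt0|exact: r_lt1|].
      apply: le_trans (floor_le (psi n)); rewrite hf -pmulrn ler_nat; lia.
    move=> /(le_trans hd) /(le_trans hlow).
    rewrite mulrC ler_pM2l ?exprn_gt0 ?r_gt0 //.
    apply/negP; rewrite -ltNge.
    by have := HN2 (maxn N1 N2).+1 ltac:(lia); rewrite mul1r.
  rewrite hsd exprnN; apply: ler_weXz2l => //; lia.
Qed.

End IFS.

Theorem proposition7p1 (R : realType) (d K : nat) (r : R)
  (phi : 'I_K -> 'rV[R]_d -> 'rV[R]_d) (X : set 'rV[R]_d) :
  (forall i, contracting_similarity r (phi i)) ->
  is_attractor phi X ->
  SSC phi X ->
  exists N : nat, forall psi : nat -> R, (forall n, 0 <= psi n) ->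
    coding phi @` @Rset R K (fun n => Num.floor (psi n) + N%:Z)%R
      `<=` Rtilde phi X r psi /\
    Rtilde phi X r psi
      `<=` coding phi @` @Rset R K (fun n => Num.floor (psi n) - N%:Z)%R.
Proof. by move=> hsim hatt hssc; apply: main_sec. Qed.
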